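(* Let $(P,\leqslant)$ be a finite partially ordered set. Then $P$ admits a selection map if and only if the associated Kolmogorov space of $P$ has the universal fixed point property.
   Context: The associated Kolmogorov space of a finite poset $P$ is the set $P$ with the topology whose open sets are the down-sets, i.e. subsets $U$ such that $x\leqslant x'$ and $x'\in U$ imply $x\in U$. Let $M(P)$ be the set of order-preserving maps $P\to P$, partially ordered pointwise ($f\leqslant g$ iff $f(x)\leqslant g(x)$ for all $x$). A selection map for $P$ is an order-preserving map $\Phi\colon M(P)\to P$ such that $f(\Phi(f))=\Phi(f)$ for all $f\in M(P)$. A topological space $X$ has the universal fixed point property if for every topological space $T$ and every continuous map $f\colon T\times X\to X$ there exists a continuous map $p\colon T\to X$ with $f(t,p(t))=p(t)$ for all $t\in T$. *)

(* Defs.v *)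
From HB Require Import structures.
From mathcomp Require Import all_boot all_order.
From mathcomp Require Import boolp classical_sets topology.
Set Implicit Arguments. Unset Strict Implicit. Unset Printing Implicit Defensive.
Import Order.TTheory.
Local Open Scope classical_set_scope.
Local Open Scope order_scope.

Section Kolmogorov.
Context {disp : Order.disp_t} (P : finPOrderType disp).

Definition order_preserving (f : P -> P) : Prop :=
  forall x y : P, x <= y -> f x <= f y.

Definition monmap := {f : P -> P | order_preserving f}.

Definition monmap_le (f g : monmap) : Prop :=
  forall x : P, proj1_sig f x <= proj1_sig g x.

Definition selection_map (Phi : monmap -> P) : Prop :=
  (forall f g : monmap, monmap_le f g -> Phi f <= Phi g) /\
  (forall f : monmap, proj1_sig f (Phi f) = Phi f).

Definition down_set (U : set P) : Prop :=
  forall x x' : P, x <= x' -> U x' -> U x.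

Definition kolmogorov : Type := P.
HB.instance Definition _ := Choice.on kolmogorov.

Lemma down_setT : down_set setT.
Proof. by []. Qed.

Lemma down_setI : setI_closed down_set.
Proof. by move=> A B hA hB x x' le [/(hA _ _ le) ? /(hB _ _ le) ?]. Qed.

Lemma down_set_bigU (I : Type) (f : I -> set P) :
  (forall i, down_set (f i)) -> down_set (\bigcup_i f i).
Proof. by move=> h x x' le [i _ fi]; exists i => //; exact: h le fi. Qed.

HB.instance Definition _ := @isOpenTopological.Build kolmogorov
  (down_set : set_system kolmogorov) down_setT down_setI down_set_bigU.

End Kolmogorov.

Definition universal_fpp (X : topologicalType) : Prop :=
  forall (T : topologicalType) (f : T * X -> X), continuous f ->
    exists p : T -> X, continuous p /\ forall t : T, f (t, p t) = p t.

(* Main.v *)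
Require Import Defs.
From HB Require Import structures.
From mathcomp Require Import all_boot all_order.
From mathcomp Require Import boolp classical_sets topology.
Set Implicit Arguments. Unset Strict Implicit. Unset Printing Implicit Defensive.
Import Order.TTheory.
Local Open Scope classical_set_scope.
Local Open Scope order_scope.

Section Aux.
Context {disp : Order.disp_t} (P : finPOrderType disp).

Lemma knbhs (x : kolmogorov P) (A : set (kolmogorov P)) :
  nbhs x A <-> (forall y : P, y <= x -> A y).
Proof.
rewrite nbhsE; split.
  move=> [B [oB Bx] BA] y yx; apply: BA; exact: oB yx Bx.
move=> H; exists [set y : kolmogorov P | (y : P) <= x] => //.
split => //=.
move=> a b ab bx; exact: le_trans ab bx.
Qed.

Definition mm := monmap P.
HB.instance Definition _ := gen_eqMixin mm.
HB.instance Definition _ := gen_choiceMixin mm.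

Definition mm_down (U : set mm) : Prop :=
  forall x x' : mm, monmap_le x x' -> U x' -> U x.

Lemma mm_downT : mm_down setT.
Proof. by []. Qed.

Lemma mm_downI : setI_closed mm_down.
Proof. by move=> A B hA hB x x' le [/(hA _ _ le) ? /(hB _ _ le) ?]. Qed.

Lemma mm_down_bigU (I : Type) (f : I -> set mm) :
  (forall i, mm_down (f i)) -> mm_down (\bigcup_i f i).
Proof. by move=> h x x' le [i _ fi]; exists i => //; exact: h le fi. Qed.

HB.instance Definition _ := @isOpenTopological.Build mm
  mm_down mm_downT mm_downI mm_down_bigU.

Lemma mm_le_trans (a b c : mm) : monmap_le a b -> monmap_le b c -> monmap_le a c.
Proof. by move=> h1 h2 x; exact: le_trans (h1 x) (h2 x). Qed.

Lemma mnbhs (g : mm) : nbhs g [set h : mm | monmap_le h g].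
Proof.
rewrite nbhsE; exists [set h : mm | monmap_le h g] => //; split => //=.
move=> a b ab bg; exact: mm_le_trans ab bg.
Qed.

Lemma mnbhs_inv (g h : mm) (A : set mm) : nbhs g A -> monmap_le h g -> A h.
Proof. rewrite nbhsE => -[B [oB Bg] BA] hg; apply: BA; exact: oB hg Bg. Qed.

End Aux.

Theorem proposition8p1 (disp : Order.disp_t) (P : finPOrderType disp) :
  (exists Phi : monmap P -> P, selection_map Phi) <->
  universal_fpp (kolmogorov P).
Proof.
split.
- move=> [Phi [Hm Hfix]] T f fc.
  have key : forall t x, \forall s \near t,
      forall y : P, y <= x -> (f (s, y) : P) <= f (t, x).
    move=> t x.
    have := fc (t, x) [set z : kolmogorov P | (z : P) <= f (t, x)].
    have hn : nbhs (f (t, x)) [set z : kolmogorov P | (z : P) <= f (t, x)].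
      by apply/knbhs.
    move=> /(_ hn) [[Q R] /= [Qt Rx] QR].
    apply: filterS Qt => s Qs y yx.
    apply: (QR (s, y)); split => //=.
    by move/knbhs: Rx; apply.
  have mono : forall t, order_preserving (fun x : P => f (t, x)).
    move=> t x x' xx'.
    exact: (nbhs_singleton (key t x') x xx').
  pose p t := Phi (exist _ _ (mono t)).
  exists p; split; last first.
    move=> t; exact: (Hfix (exist _ _ (mono t))).
  move=> t A /= /knbhs HA.
  have : \forall s \near t, forall x : P, (f (s, x) : P) <= f (t, x).
    apply: filter_forall => x.
    by apply: filterS (key t x) => s H; apply: H.
  apply: filterS => s Hs.
  apply: HA; apply: Hm => x /=; exact: Hs.
- move=> H.
  pose f (q : mm P * kolmogorov P) : kolmogorov P := proj1_sig q.1 q.2.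
  have fc : continuous f.
    move=> [g x] A /= /knbhs HA.
    exists ([set h : mm P | monmap_le h g], [set y : kolmogorov P | (y : P) <= x]).
      split; first exact: mnbhs.
      by apply/knbhs.
    move=> [h y] [/= hg yx].
    apply: HA; rewrite /f /=.
    apply: le_trans (hg y) _.
    exact: (proj2_sig g).
  have [p [pc pfix]] := H (mm P) f fc.
  exists p; split; last first.
    move=> g; exact: (pfix g).
  move=> g h gh.
  have hn : nbhs (p h) [set z : kolmogorov P | (z : P) <= p h] by apply/knbhs.
  have := pc h _ hn.
  move=> /= Hn.
  exact: (mnbhs_inv Hn gh).
Qed.
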